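(* Fix $d\ge1$ and $\varepsilon>0$. If $f_1,f_2\in\mathsf{Tree}_d$ satisfy $\mathrm{MSE}(f_i)\le R(\mathsf{Tree}_d)+\varepsilon$ for $i\in\{1,2\}$, then \[ D(f_1,f_2)\le4\big(R(\mathsf{Tree}_d)-R(\mathsf{Tree}_{2d})+\varepsilon\big). \]
   Context: $P$ is a distribution on $\mathcal X\times\mathcal Y$ with $\mathcal X\subseteq\mathbb R^m$, $\mathcal Y\subseteq\mathbb R$; expectations are over $(x,y)\sim P$; $\mathrm{MSE}(f)=\mathbb E[(y-f(x))^2]$, $R(\mathcal F)=\inf_{f\in\mathcal F}\mathrm{MSE}(f)$, $D(f_1,f_2)=\mathbb E[(f_1(x)-f_2(x))^2]$. An axis-aligned regression tree is a rooted binary tree each internal node of which is labeled by a coordinate $j\in[m]$ and threshold $t\in\mathbb R$ and sends $x$ to the left child if $x_j\le t$ and to the right child otherwise; each leaf is labeled by a constant in $[0,1]$; the tree computes the label of the leaf reached by $x$. $\mathsf{Tree}_d$ is the class of predictors computed by such trees of depth at most $d$. *)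

(* Defs.v *)
From HB Require Import structures.
From mathcomp Require Import all_boot all_order all_algebra.
From mathcomp Require Import all_classical all_reals all_analysis.
Set Implicit Arguments. Unset Strict Implicit. Unset Printing Implicit Defensive.
Import Order.TTheory GRing.Theory Num.Theory.
Local Open Scope classical_set_scope.
Local Open Scope ring_scope.

Inductive rtree (R : Type) (m : nat) : Type :=
| RLeaf : R -> rtree R m
| RNode : 'I_m -> R -> rtree R m -> rtree R m -> rtree R m.
Arguments RLeaf {R m}.
Arguments RNode {R m}.

Fixpoint rtree_depth (R : Type) (m : nat) (t : rtree R m) : nat :=
  match t with
  | RLeaf _ => 0%N
  | RNode _ _ l r => (maxn (rtree_depth l) (rtree_depth r)).+1
  end.

Fixpoint rtree_labels_ok (R : realType) (m : nat) (t : rtree R m) : Prop :=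
  match t with
  | RLeaf c => 0 <= c <= 1
  | RNode _ _ l r => rtree_labels_ok l /\ rtree_labels_ok r
  end.

Fixpoint rtree_eval (R : realType) (m : nat) (t : rtree R m) (x : 'rV[R]_m) : R :=
  match t with
  | RLeaf c => c
  | RNode j th l r => if x ord0 j <= th then rtree_eval l x else rtree_eval r x
  end.

Definition Tree (R : realType) (m d : nat) : set ('rV[R]_m -> R) :=
  [set f | exists t : rtree R m,
      [/\ (rtree_depth t <= d)%N, rtree_labels_ok t & f = rtree_eval t]].

Local Open Scope ereal_scope.

(* The data (x,y) ~ P is modelled as a pair of random variables X, Y on a
   probability space (T, P); expectations over (x,y) ~ P are integrals over P. *)
Definition MSE (dT : measure_display) (T : measurableType dT) (R : realType)
  (P : probability T R) (m : nat) (X : T -> 'rV[R]_m) (Y : T -> R)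
  (f : 'rV[R]_m -> R) : \bar R :=
  \int[P]_w (((Y w - f (X w)) ^+ 2)%R)%:E.

Definition Risk (dT : measure_display) (T : measurableType dT) (R : realType)
  (P : probability T R) (m : nat) (X : T -> 'rV[R]_m) (Y : T -> R)
  (F : set ('rV[R]_m -> R)) : \bar R :=
  ereal_inf [set MSE P X Y f | f in F].

Definition Dist (dT : measure_display) (T : measurableType dT) (R : realType)
  (P : probability T R) (m : nat) (X : T -> 'rV[R]_m)
  (f1 f2 : 'rV[R]_m -> R) : \bar R :=
  \int[P]_w (((f1 (X w) - f2 (X w)) ^+ 2)%R)%:E.

(* Main.v *)
Require Import Defs.
From HB Require Import structures.
From mathcomp Require Import all_boot all_order all_algebra.
From mathcomp Require Import all_classical all_reals all_analysis.
From mathcomp Require Import measurable_realfun.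
From mathcomp Require Import lra ring.
Import Order.TTheory GRing.Theory Num.Theory.
Set Implicit Arguments. Unset Strict Implicit.
Local Open Scope classical_set_scope.
Local Open Scope ring_scope.

Section Trees.
Variables (R : realType) (m : nat).

Fixpoint rmap (g : R -> R) (t : rtree R m) : rtree R m :=
  match t with
  | RLeaf c => RLeaf (g c)
  | RNode j th l r => RNode j th (rmap g l) (rmap g r)
  end.

Fixpoint graft (t1 t2 : rtree R m) : rtree R m :=
  match t1 with
  | RLeaf c => rmap (fun c' => (c + c') / 2) t2
  | RNode j th l r => RNode j th (graft l t2) (graft r t2)
  end.

Lemma rmap_depth g t : rtree_depth (rmap g t) = rtree_depth t.
Proof. by elim: t => //= j th l -> r ->. Qed.

Lemma rmap_eval g t x : rtree_eval (rmap g t) x = g (rtree_eval t x).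
Proof. by elim: t => //= j th l -> r ->; case: ifP. Qed.

Lemma graft_depth t1 t2 :
  (rtree_depth (graft t1 t2) <= rtree_depth t1 + rtree_depth t2)%N.
Proof.
elim: t1 => [c|j th l IHl r IHr] /=; first by rewrite rmap_depth.
rewrite addSn ltnS geq_max; apply/andP; split.
  by apply: (leq_trans IHl); rewrite leq_add2r leq_maxl.
by apply: (leq_trans IHr); rewrite leq_add2r leq_maxr.
Qed.

Lemma graft_eval t1 t2 x :
  rtree_eval (graft t1 t2) x = (rtree_eval t1 x + rtree_eval t2 x) / 2.
Proof.
elim: t1 => [c|j th l IHl r IHr] /=; first by rewrite rmap_eval.
by case: ifP.
Qed.

Lemma rmap_ok g t : (forall c, 0 <= c <= 1 -> 0 <= g c <= 1) ->
  rtree_labels_ok t -> rtree_labels_ok (rmap g t).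
Proof. by move=> H; elim: t => [c|j th l IHl r IHr] /=; [apply: H|case=> /IHl ? /IHr]. Qed.

Lemma graft_ok t1 t2 : rtree_labels_ok t1 -> rtree_labels_ok t2 ->
  rtree_labels_ok (graft t1 t2).
Proof.
move=> h1 h2; elim: t1 h1 => [c|j th l IHl r IHr] /=; last first.
  by case=> /IHl ? /IHr.
move=> /andP[c0 c1]; apply: rmap_ok => // c' /andP[c'0 c'1].
apply/andP; split; first by rewrite divr_ge0 // addr_ge0.
rewrite ler_pdivrMr // mul1r; apply: (le_trans (lerD c1 c'1)); by [].
Qed.

Lemma eval_bnd (t : rtree R m) x : rtree_labels_ok t -> 0 <= rtree_eval t x <= 1.
Proof. by elim: t => [c|j th l IHl r IHr] //= [/IHl ? /IHr ?]; case: ifP. Qed.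

Lemma Tree_avg d f1 f2 : @Tree R m d f1 -> @Tree R m d f2 ->
  @Tree R m (2 * d) (fun x => (f1 x + f2 x) / 2).
Proof.
move=> [t1 [d1 o1 ->]] [t2 [d2 o2 ->]]; exists (graft t1 t2); split.
- by apply: (leq_trans (graft_depth _ _)); rewrite mul2n -addnn leq_add.
- exact: graft_ok.
- by apply: funext => x; rewrite graft_eval.
Qed.

Lemma Tree_mono d d' : (d <= d')%N -> @Tree R m d `<=` @Tree R m d'.
Proof. by move=> dd f [t [h1 h2 ->]]; exists t; split => //; exact: leq_trans dd. Qed.

Lemma Tree_bnd d f x : @Tree R m d f -> 0 <= f x <= 1.
Proof. by move=> [t [_ o ->]]; exact: eval_bnd. Qed.

Lemma eval_meas (dT : measure_display) (T : measurableType dT) (X : T -> 'rV[R]_m)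
  (HX : forall j : 'I_m, measurable_fun setT (fun w => X w ord0 j)) t :
  measurable_fun setT (fun w => rtree_eval t (X w)).
Proof.
elim: t => [c|j th l IHl r IHr] /=; first exact: measurable_cst.
apply: measurable_fun_ifT => //.
by apply: measurable_realfun.measurable_fun_ler => //; exact: measurable_cst.
Qed.

Lemma Tree_meas d (dT : measure_display) (T : measurableType dT) (X : T -> 'rV[R]_m)
  (HX : forall j : 'I_m, measurable_fun setT (fun w => X w ord0 j)) f :
  @Tree R m d f -> measurable_fun setT (fun w => f (X w)).
Proof. by move=> [t [_ _ ->]]; exact: eval_meas. Qed.

End Trees.

Local Open Scope ereal_scope.

Section Main.
Context (dT : measure_display) (T : measurableType dT) (R : realType)
  (P : probability T R).

Lemma sq_meas (Y h : T -> R) : measurable_fun setT Y -> measurable_fun setT h ->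
  measurable_fun setT (fun w => (((Y w - h w) ^+ 2)%R)%:E).
Proof.
move=> mY mh; apply/measurable_EFinP.
by apply: measurable_funX; apply: measurable_funB.
Qed.

Lemma int_fin (Y h : T -> R) : measurable_fun setT Y -> measurable_fun setT h ->
  P.-integrable setT (fun w => ((Y w ^+ 2)%R)%:E) ->
  (forall w, (0 <= h w <= 1)%R) ->
  \int[P]_w (((Y w - h w) ^+ 2)%R)%:E < +oo.
Proof.
move=> mY mh /integrableP[_ iY] hb.
have mY2 : measurable_fun setT (fun w => ((Y w ^+ 2)%R)%:E).
  by apply/measurable_EFinP; apply: measurable_funX.
apply: (@le_lt_trans _ _ (\int[P]_w (2%:E * ((Y w ^+ 2)%R)%:E + cst 2%:E w))).
  apply: ge0_le_integral => //.
  - by move=> w _; rewrite lee_fin sqr_ge0.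
  - exact: sq_meas.
  - apply: emeasurable_funD; last exact: measurable_cst.
    by apply: emeasurable_funM => //; exact: measurable_cst.
  move=> w _ /=; rewrite -EFinM -EFinD lee_fin.
  have /andP[h0 h1] := hb w.
  have : ((h w)^+2 <= 1)%R by rewrite expr_le1.
  have := sqr_ge0 (Y w + h w).
  rewrite !expr2 => ? ?; nra.
rewrite ge0_integralD //.
- rewrite ge0_integralZl_EFin //; last by move=> w _; rewrite lee_fin sqr_ge0.
  rewrite integral_cst //.
  rewrite [X in _ + _ * X]probability_setT mule1.
  have fin : \int[P]_w ((Y w ^+ 2)%R)%:E \is a fin_num.
    rewrite ge0_fin_numE ?integral_ge0 //; last by move=> w _; rewrite lee_fin sqr_ge0.
    move: iY; under eq_integral do rewrite gee0_abs ?lee_fin ?sqr_ge0 //.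
    by [].
  by rewrite -(fineK fin) -EFinM -EFinD ltry.
- by move=> w _; rewrite -EFinM lee_fin mulr_ge0 // sqr_ge0.
- by apply: emeasurable_funM => //; exact: measurable_cst.
- by move=> w _; rewrite lee_fin.
Qed.

Lemma int_add (f g : T -> R) : measurable_fun setT f -> measurable_fun setT g ->
  (forall w, 0 <= f w)%R -> (forall w, 0 <= g w)%R ->
  \int[P]_w (f w)%:E + \int[P]_w (g w)%:E = \int[P]_w ((f w + g w)%R)%:E.
Proof.
move=> mf mg f0 g0.
under [RHS]eq_integral do rewrite EFinD.
rewrite ge0_integralD //.
- by move=> w _; rewrite lee_fin.
- exact/measurable_EFinP.
- by move=> w _; rewrite lee_fin.
- exact/measurable_EFinP.
Qed.

End Main.

Theorem corollary3 (dT : measure_display) (T : measurableType dT) (R : realType)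
  (P : probability T R) (m : nat) (X : T -> 'rV[R]_m) (Y : T -> R)
  (HX : forall j : 'I_m, measurable_fun setT (fun w => X w ord0 j))
  (HY : measurable_fun setT Y)
  (HY2 : P.-integrable setT (fun w => ((Y w ^+ 2)%R)%:E))
  (d : nat) (eps : R) (f1 f2 : 'rV[R]_m -> R) :
  (1 <= d)%N -> (0 < eps)%R ->
  @Tree R m d f1 -> @Tree R m d f2 ->
  MSE P X Y f1 <= Risk P X Y (@Tree R m d) + eps%:E ->
  MSE P X Y f2 <= Risk P X Y (@Tree R m d) + eps%:E ->
  Dist P X f1 f2 <=
    4%:E * (Risk P X Y (@Tree R m d) - Risk P X Y (@Tree R m (2 * d)) + eps%:E).
Proof.
move=> d1 e0 T1 T2 h1 h2.
pose g := fun x => ((f1 x + f2 x) / 2)%R.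
have Tg : @Tree R m (2 * d) g := Tree_avg T1 T2.
have dd2 : (d <= 2 * d)%N by rewrite mul2n -addnn leq_addr.
have T1' : @Tree R m (2 * d) f1 := Tree_mono dd2 T1.
have m1 := Tree_meas HX T1; have m2 := Tree_meas HX T2; have mg := Tree_meas HX Tg.
have fin f e : @Tree R m e f -> MSE P X Y f \is a fin_num.
  move=> Tf; rewrite ge0_fin_numE; last by apply: integral_ge0 => w _; rewrite lee_fin sqr_ge0.
  rewrite /MSE; apply: (int_fin HY (Tree_meas HX Tf) HY2).
  by move=> w; apply: (Tree_bnd _ Tf).
have Mge0 f : 0 <= MSE P X Y f by apply: integral_ge0 => w _; rewrite lee_fin sqr_ge0.
have Rge0 e : 0 <= Risk P X Y (@Tree R m e).
  by apply: le_ereal_inf_tmp => _ [f _ <-].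
have Rd1 : Risk P X Y (@Tree R m d) <= MSE P X Y f1 by apply: ereal_inf_lbound; exists f1.
have R21 : Risk P X Y (@Tree R m (2 * d)) <= MSE P X Y f1 by apply: ereal_inf_lbound; exists f1.
have R2g : Risk P X Y (@Tree R m (2 * d)) <= MSE P X Y g by apply: ereal_inf_lbound; exists g.
have sqm (h : T -> R) : measurable_fun setT h -> measurable_fun setT (fun w => (((Y w - h w) ^+ 2)%R)%:E).
  by move=> mh; exact: sq_meas.
have mD : measurable_fun setT (fun w => (((f1 (X w) - f2 (X w)) ^+ 2)%R)%:E).
  by apply/measurable_EFinP; apply: measurable_funX; apply: measurable_funB.
have Z (k : R) (h : T -> R) : (0 <= k)%R -> measurable_fun setT h ->
    k%:E * \int[P]_w (((Y w - h w) ^+ 2)%R)%:E = \int[P]_w ((k * (Y w - h w) ^+ 2)%R)%:E.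
  move=> k0 mh; rewrite -ge0_integralZl_EFin //.
  - by move=> w _; rewrite lee_fin sqr_ge0.
  - exact: sqm.
have Hid : 2%:E * MSE P X Y f1 + 2%:E * MSE P X Y f2 = 4%:E * MSE P X Y g + Dist P X f1 f2.
  rewrite /MSE /Dist (Z _ _ _ m1) // (Z _ _ _ m2) // (Z _ _ _ mg) //.
  have sqm' (k : R) (h : T -> R) : measurable_fun setT h ->
      measurable_fun setT (fun w => (k * (Y w - h w) ^+ 2)%R).
    by move=> mh; apply: measurable_funM; [exact: measurable_cst|apply/measurable_EFinP; exact: sqm].
  rewrite !int_add //; try by move=> w; first [apply: sqr_ge0|apply: mulr_ge0 => //; apply: sqr_ge0].
  all: try exact: sqm'.
  all: try by apply: measurable_funX; apply: measurable_funB.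
  apply: eq_integral => w _; congr EFin.
  by rewrite /g; field.
have [a1 E1] : exists a, MSE P X Y f1 = a%:E by exists (fine (MSE P X Y f1)); rewrite fineK //; exact: fin T1.
have [a2 E2] : exists a, MSE P X Y f2 = a%:E by exists (fine (MSE P X Y f2)); rewrite fineK //; exact: fin T2.
have [ag Eg] : exists a, MSE P X Y g = a%:E by exists (fine (MSE P X Y g)); rewrite fineK //; exact: fin Tg.
have [rd Ed] : exists a, Risk P X Y (@Tree R m d) = a%:E.
  exists (fine (Risk P X Y (@Tree R m d))); rewrite fineK // ge0_fin_numE //.
  by apply: (le_lt_trans Rd1); rewrite E1 ltry.
have [r2 E2d] : exists a, Risk P X Y (@Tree R m (2 * d)) = a%:E.
  exists (fine (Risk P X Y (@Tree R m (2 * d)))); rewrite fineK // ge0_fin_numE //.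
  by apply: (le_lt_trans R21); rewrite E1 ltry.
rewrite E1 E2 Eg in Hid; rewrite E1 Ed in h1; rewrite E2 Ed in h2.
rewrite Eg E2d in R2g.
rewrite Ed E2d.
case ED : (Dist P X f1 f2) Hid => [dv| |] Hid.
- rewrite -!EFinM -!EFinD in Hid; case: Hid => Hid.
  rewrite -EFinB -EFinD -EFinM lee_fin.
  rewrite -EFinD !lee_fin in h1 h2 R2g.
  lra.
- by rewrite -!EFinM -!EFinD in Hid.
- by rewrite -EFinM -EFinD in Hid.
Qed.
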